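(* Consider the delayed online learning protocol of the context. Let $(U_t)_{t\in\{1,\dots,T\}}$ be a non-decreasing sequence of positive numbers with $U_t\ge L_t$ for all $t$. Fix $r>0$ and $p\in\mathcal X$ with $h(p)\le r^2$. Then running DDA with $\eta_t=r/\sqrt{U_t}$ gives \[R_T(p)\le 2r\sqrt{U_T}.\]
   Context: Let $\mathcal V$ be a finite-dimensional real vector space with norm $\|\cdot\|$ and dual norm $\|\cdot\|_*$, and $\mathcal X\subset\mathcal V$ closed convex. A regularizer $h:\mathcal V\to\mathbb R\cup\{+\infty\}$ is lower semicontinuous, $1$-strongly convex w.r.t. $\|\cdot\|$ on $\mathcal X$, with $\mathcal X\subset\operatorname{dom}h$, whose subdifferential admits a continuous selection, and $h\ge0$. Protocol: at each round $t=1,\dots,T$ one agent $i(t)$ is active, plays $x_t\in\mathcal X$, incurs $f_t(x_t)$ ($f_t$ convex, $\mathcal X\subset\operatorname{dom}\partial f_t$); a subgradient $g_t\in\partial f_t(x_t)$ is revealed later. $\mathcal S^i_t\subset\{1,\dots,t-1\}$: timestamps of subgradients available to agent $i$ at time $t$, nondecreasing in $t$; $\mathcal S_t=\mathcal S^{i(t)}_t$, $\mathcal U_t=\{1,\dots,t-1\}\setminus\mathcal S_t$. DDA: $x_t=\arg\min_{x\in\mathcal X}\{\sum_{s\in\mathcal S_t}\langle g_s,x\rangle+h(x)/\eta_t\}$. Regret: $R_T(p)=\sum_tf_t(x_t)-\sum_tf_t(p)$. Lag: $L_t=\sum_{s=1}^t\big(\|g_s\|_*^2+2\|g_s\|_*\sum_{q\in\mathcal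 U_s}\|g_q\|_*\big)$. *)

(* Defs.v *)
From HB Require Import structures.
From mathcomp Require Import all_boot all_order all_algebra.
From mathcomp Require Import all_classical all_reals all_analysis.
Set Implicit Arguments. Unset Strict Implicit. Unset Printing Implicit Defensive.
Import Order.TTheory GRing.Theory Num.Theory.
Import numFieldNormedType.Exports.
Local Open Scope classical_set_scope.
Local Open Scope ring_scope.

Section Defs.
Context {R : realType} {n : nat}.
Local Notation V := 'rV[R]_n.

(* duality pairing <g, x>; the dual space of 'rV_n is identified with 'rV_n *)
Definition dotp (g x : V) : R := \sum_(i < n) g 0 i * x 0 i.

Definition is_norm (N : V -> R) : Prop :=
  [/\ forall x, N x = 0 -> x = 0,
      forall (a : R) x, N (a *: x) = `|a| * N x &
      forall x y, N (x + y) <= N x + N y].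

Definition dual_norm (N : V -> R) (g : V) : R :=
  sup [set dotp g x | x in [set x | N x <= 1]].

Definition convex_efun (f : V -> \bar R) : Prop :=
  forall x y (l : R), 0 < l < 1 ->
    (f (l *: x + (1 - l) *: y)%R <= l%:E * f x + (1 - l)%:E * f y)%E.

Definition subdiff (f : V -> \bar R) (x : V) : set V :=
  [set g | f x \is a fin_num /\ forall y, (f x + (dotp g (y - x)%R)%:E <= f y)%E].

Definition dom_subdiff (f : V -> \bar R) : set V :=
  [set x | exists g, subdiff f x g].

Definition strongly_convex_on (N : V -> R) (X : set V) (h : V -> \bar R) : Prop :=
  forall x y (l : R), X x -> X y -> 0 <= l <= 1 ->
    (h (l *: x + (1 - l) *: y)%R <=
       l%:E * h x + (1 - l)%:E * h y - (l * (1 - l) / 2 * N (x - y) ^+ 2)%:E)%E.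

Definition continuous_subgrad_selection (h : V -> \bar R) : Prop :=
  exists s : V -> V, (forall x, dom_subdiff h x -> subdiff h x (s x)) /\
                     {within dom_subdiff h, continuous s}.

End Defs.

(* Main.v *)
Require Import Defs.
From HB Require Import structures.
From mathcomp Require Import all_boot all_order all_algebra.
From mathcomp Require Import all_classical all_reals all_analysis.
Import Order.TTheory GRing.Theory Num.Theory.
Import numFieldNormedType.Exports.
Local Open Scope classical_set_scope.
Local Open Scope ring_scope.
From mathcomp Require Import ring lra zify.
From Stdlib Require Import Lia.
Lemma alg_G3 {R : realFieldType} (a g c L d : R) :
  0 < a -> 0 <= g -> 0 <= c -> 0 < L -> 0 <= d ->
  a * d ^+ 2 <= c * d + L ^+ 3 ->
  a * g * d <= g * c + a * L / 2 + g ^+ 2 * L ^+ 2 / 2.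
Proof.
move=> a0 g0 c0 L0 d0 h.
have [hs|hs] := leP (a * d) c.
  have : g * (a * d) <= g * c by apply: ler_wpM2l.
  have : 0 <= a * L by apply: mulr_ge0; lra.
  have : 0 <= g ^+ 2 * L ^+ 2 by apply: mulr_ge0; apply: exprn_ge0; lra.
  nra.
set s := a * d - c.
have s0 : 0 < s by rewrite /s; lra.
have h1 : s * d <= L ^+ 3 by rewrite /s; nra.
have h2 : s ^+ 2 <= a * L ^+ 3.
  have : s <= a * d by rewrite /s; lra.
  move=> hsd. have : s * s <= a * d * s by apply: ler_wpM2r; lra.
  have : a * (s * d) <= a * L ^+ 3 by apply: ler_wpM2l; lra.
  rewrite expr2. nra.
have h3 : 2 * (a * L) * (g * s) <= (a * L) ^+ 2 + g ^+ 2 * s ^+ 2.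
  have := sqr_ge0 (a * L - g * s). nra.
have h4 : g ^+ 2 * s ^+ 2 <= g ^+ 2 * (a * L ^+ 3).
  apply: ler_wpM2l => //; exact: exprn_ge0.
have aL0 : 0 < a * L by apply: mulr_gt0.
have h5 : 2 * (g * s) <= a * L + g ^+ 2 * L ^+ 2.
  rewrite -(ler_pM2l aL0). 
  have -> : a * L * (a * L + g ^+ 2 * L ^+ 2) = (a * L) ^+ 2 + g ^+ 2 * (a * L ^+ 3) by ring.
  rewrite mulrA (mulrC (a * L)). lra.
rewrite /s in h5. nra.
Qed.

Lemma alg_key {R : realFieldType} (k g c L D d P l : R) :
  0 < k -> 0 <= g -> 0 <= c -> 0 < L -> L <= 1/2 -> 0 <= D -> 0 <= d ->
  (1 - L) * k * D ^+ 2 / 2 - L ^+ 3 <= P ->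
  (1 - L) * k * d ^+ 2 <= c * d + L ^+ 3 ->
  - g * D - g * d <= l ->
  - L * (k + 2 * g ^+ 2 + 2 * g * c) <= k * (P + l) + g ^+ 2 / 2 + g * c.
Proof.
move=> k0 g0 c0 L0 Lh D0 d0 hP hd hl.
set a := (1 - L) * k.
have a0 : 0 < a by rewrite /a; apply: mulr_gt0 => //; lra.
have G3 := @alg_G3 R a g c L d a0 g0 c0 L0 d0 hd.
set u := (1 - L)^-1.
have L1 : 0 < 1 - L by lra.
have hu : u * (1 - L) = 1 by rewrite /u mulVf //; lra.
have u1 : 1 <= u by rewrite /u invf_ge1 //; lra.
have u2 : u <= 1 + 2 * L.
  have : u * (1 - L) <= (1 + 2 * L) * (1 - L) by rewrite hu; nra.
  by rewrite ler_pM2r.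
have hua : u * a = k by rewrite /a mulrA hu mul1r.
have K3 : k * g * d <= u * (g * c) + k * L / 2 + u * (g ^+ 2 * L ^+ 2) / 2.
  have : u * (a * g * d) <= u * (g * c + a * L / 2 + g ^+ 2 * L ^+ 2 / 2).
    by apply: ler_wpM2l => //; lra.
  have -> : u * (a * g * d) = (u * a) * g * d by ring.
  rewrite hua. 
  have -> : u * (g * c + a * L / 2 + g ^+ 2 * L ^+ 2 / 2) = u * (g * c) + (u * a) * L / 2 + u * (g ^+ 2 * L ^+ 2) / 2 by ring.
  by rewrite hua.
have K2 : 0 <= k * a * D ^+ 2 / 2 - k * g * D + u * g ^+ 2 / 2.
  have := sqr_ge0 (a * D - g).
  have sq : forall (u a k g D : R), u * a = k ->
      k * a * D ^+ 2 / 2 - k * g * D + u * g ^+ 2 / 2 = u / 2 * (a * D - g) ^+ 2.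
    by move=> u' a' k' g' D' <-; field.
  rewrite (sq u a k g D hua).
  move=> h; apply: mulr_ge0 => //. apply: divr_ge0 => //. lra.
have K1 : k * ((1 - L) * k * D ^+ 2 / 2 - L ^+ 3) <= k * P by apply: ler_wpM2l; lra.
have Kl : k * (- g * D - g * d) <= k * l by apply: ler_wpM2l; lra.
have g2 : 0 <= g ^+ 2 by apply: exprn_ge0.
have gc : 0 <= g * c by apply: mulr_ge0.
have e1 : u * g ^+ 2 <= (1 + 2 * L) * g ^+ 2 by apply: ler_wpM2r.
have e2 : u * (g * c) <= (1 + 2 * L) * (g * c) by apply: ler_wpM2r.
have e3 : u * (g ^+ 2 * L ^+ 2) <= 2 * (g ^+ 2 * L ^+ 2).
  apply: ler_wpM2r; last lra. apply: mulr_ge0 => //. exact: sqr_ge0.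
have e4 : g ^+ 2 * L ^+ 2 <= g ^+ 2 * L / 2.
  rewrite expr2 mulrA. have : g ^+ 2 * L * L <= g ^+ 2 * L * (1/2).
    apply: ler_wpM2l => //. apply: mulr_ge0 => //; lra.
  lra.
have e5 : k * L ^+ 3 <= k * L / 4.
  have : L ^+ 3 <= L / 4.
    have : L * L <= 1/2 * (1/2) by nra.
    rewrite exprS expr2. nra.
  move=> h; have := ler_wpM2l (ltW k0) h. lra.
have E0 : k * a * D ^+ 2 / 2 = k * ((1 - L) * k * D ^+ 2 / 2) by rewrite /a; ring.
rewrite E0 in K2.
move: K1 Kl K2 K3 e1 e2 e3 e4 e5.
set X1 := k * ((1 - L) * k * D ^+ 2 / 2).
move=> K1 Kl K2 K3 e1 e2 e3 e4 e5.
have E1 : k * ((1 - L) * k * D ^+ 2 / 2 - L ^+ 3) = X1 - k * L ^+ 3 by rewrite /X1; ring.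
have E2 : k * (- g * D - g * d) = - (k * g * D) - k * g * d by ring.
rewrite E1 in K1; rewrite E2 in Kl.
have E3 : - L * (k + 2 * g ^+ 2 + 2 * g * c) = - (k * L) - 2 * (g ^+ 2 * L) - 2 * (L * (g * c)) by ring.
rewrite E3.
have E4 : (1 + 2 * L) * g ^+ 2 = g ^+ 2 + 2 * (g ^+ 2 * L) by ring.
have E5 : (1 + 2 * L) * (g * c) = g * c + 2 * (L * (g * c)) by ring.
rewrite E4 in e1; rewrite E5 in e2.
rewrite mulrDr.
nra.
Qed.
Lemma lim_small {R : realFieldType} (M Z : R) : 0 <= M ->
  (forall L, 0 < L -> L <= 1/2 -> - L * M <= Z) -> 0 <= Z.
Proof.
move=> M0 h. apply/ler_addgt0Pr => e e0.
have M1 : 0 < M + 1 by lra.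
set L := Num.min (1/2 : R) (e / (M + 1)).
have L0 : 0 < L by rewrite /L lt_min; apply/andP; split; [lra| exact: divr_gt0].
have L1 : L <= 1/2 by rewrite /L ge_min lexx.
have L2 : L <= e / (M + 1) by rewrite /L ge_min lexx orbT.
have := h L L0 L1.
have : L * M <= e.
  have : L * (M + 1) <= e by rewrite -ler_pdivlMr.
  have : 0 <= L by lra.
  nra.
lra.
Qed.
Section NormFacts.
Context {R : realType} {n : nat} (N : 'rV[R]_n -> R) (hN : is_norm N).
Local Notation V := 'rV[R]_n.

Lemma N0 : N 0 = 0.
Proof. case: hN => _ hZ _. by rewrite -(scale0r (0:V)) hZ normr0 mul0r. Qed.
Lemma NN x : N (- x) = N x.
Proof. case: hN => _ hZ _. by rewrite -scaleN1r hZ normrN normr1 mul1r. Qed.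
Lemma Nge0 x : 0 <= N x.
Proof. case: hN => _ _ hD. have := hD x (-x). rewrite subrr N0 NN. lra. Qed.
Lemma NB x y : N (x - y) = N (y - x).
Proof. by rewrite -NN opprB. Qed.
Lemma NZ a x : N (a *: x) = `|a| * N x.
Proof. case: hN => _ h _; exact: h. Qed.
Lemma ND x y : N (x + y) <= N x + N y.
Proof. case: hN => _ _ h; exact: h. Qed.
Lemma N_eq0 x : N x = 0 -> x = 0.
Proof. case: hN => h _ _; exact: h. Qed.

Lemma N_sum (I : finType) (F : I -> V) : N (\sum_i F i) <= \sum_i N (F i).
Proof.
apply: (big_ind2 (fun a b => N a <= b)) => //; first by rewrite N0.
move=> a b c d h1 h2. apply: (le_trans (ND _ _)). exact: lerD.
Qed.

Lemma coord_le (x : V) j : `|x 0 j| <= `|x|.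
Proof.
rewrite [leRHS]/Num.Def.normr /= mx_normrE.
exact: (le_bigmax _ (fun ij : 'I_1 * 'I_n => `|x ij.1 ij.2|) (0, j)).
Qed.

Definition KN := \sum_(j < n) N 'e_j.

Lemma N_upper x : N x <= KN * `|x|.
Proof.
apply: (@le_trans _ _ (\sum_(j < n) N (x 0 j *: 'e_j))).
  have E := row_sum_delta x. rewrite [X in N X]E. exact: N_sum.
rewrite /KN mulr_suml. apply: ler_sum => j _. rewrite NZ mulrC.
apply: ler_wpM2l; first exact: Nge0. exact: coord_le.
Qed.

Lemma KN_ge0 : 0 <= KN.
Proof. apply: sumr_ge0 => j _; exact: Nge0. Qed.

Lemma N_cont : continuous N.
Proof.
move=> x; apply/(@cvgrPdist_lt _ _ _ _ (nbhs_filter x)) => e e0.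
have d0 : 0 < e / (KN + 1) by rewrite divr_gt0 // (le_lt_trans KN_ge0) // ltrDl.
near=> y.
have hy : `|x - y| < e / (KN + 1).
  near: y. exact: (@nbhs_ball_norm _ _ x (PosNum d0)).
have h1 : N x <= N (x - y) + N y by rewrite -{1}(subrK y x); exact: ND.
have h2 : N y <= N (y - x) + N x by rewrite -{1}(subrK x y); exact: ND.
rewrite NB in h1.
have h3 : N (y - x) <= KN * `|x - y| by rewrite -normrN opprB; exact: N_upper.
have h4 : KN * `|x - y| <= KN * (e / (KN + 1)) by apply: ler_wpM2l; [exact: KN_ge0| exact: ltW].
have h5 : KN * (e / (KN + 1)) < e.
  rewrite mulrA ltr_pdivrMr; last by rewrite (le_lt_trans KN_ge0) // ltrDl.
  rewrite mulrC ltr_pM2l //. by rewrite ltrDl.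
rewrite ltr_norml; apply/andP; split; lra.
Unshelve. all: by end_near.
Qed.


Lemma N_lower : exists2 c, 0 < c & forall x, c * `|x| <= N x.
Proof.
case: (pselect (exists x : V, `|x| = 1)) => [[u u1]|nou]; last first.
  exists 1 => // x. have [->|x0] := eqVneq x 0; first by rewrite normr0 mulr0 Nge0.
  exfalso; apply: nou; exists (`|x|^-1 *: x).
  by rewrite normrZ normrV ?unitfE ?normr_eq0 // normr_id mulVf // normr_eq0.
pose S := [set x : V | `|x| = 1].
have S0 : S !=set0 by exists u.
have cS : compact S.
  apply: bounded_closed_compact.
    rewrite /= /bounded_near. near=> M => x /= ->. near: M. exact: nbhs_pinfty_ge.
  have -> : S = Num.Def.normr @^-1` [set r : R | r = 1] by [].
  move/continuous_closedP: (@norm_continuous _ V). apply. exact: closed_eq.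
have [c cS' cmin] := EVT_min_rV S0 cS (@continuous_subspaceT _ _ S N N_cont).
have c1 : `|c| = 1 by move: cS'; rewrite inE.
have Nc0 : 0 < N c.
  rewrite lt_neqAle Nge0 andbT eq_sym; apply/eqP => /N_eq0 c0.
  by move: c1; rewrite c0 normr0 => /eqP; rewrite eq_sym oner_eq0.
exists (N c) => // x. have [->|x0] := eqVneq x 0; first by rewrite normr0 mulr0 Nge0.
have nx0 : 0 < `|x| by rewrite normr_gt0.
have := cmin (`|x|^-1 *: x).
rewrite inE /S /= normrZ normrV ?unitfE ?normr_eq0 // normr_id mulVf ?normr_eq0 //.
move=> /(_ erefl). rewrite NZ normrV ?unitfE ?normr_eq0 // normr_id.
by rewrite ler_pdivlMl // mulrC.
Unshelve. all: by end_near.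
Qed.


Lemma dotpDr (g x y : V) : dotp g (x + y) = dotp g x + dotp g y.
Proof. rewrite /dotp -big_split /=; apply: eq_bigr => i _; rewrite mxE; ring. Qed.
Lemma dotpZr (g : V) a (x : V) : dotp g (a *: x) = a * dotp g x.
Proof. rewrite /dotp mulr_sumr; apply: eq_bigr => i _; rewrite mxE; ring. Qed.
Lemma dotp0r (g : V) : dotp g 0 = 0.
Proof. by rewrite -(scale0r (0:V)) dotpZr mul0r. Qed.
Lemma dotpNr (g x : V) : dotp g (- x) = - dotp g x.
Proof. by rewrite -scaleN1r dotpZr mulN1r. Qed.
Lemma dotpBr (g x y : V) : dotp g (x - y) = dotp g x - dotp g y.
Proof. by rewrite dotpDr dotpNr. Qed.

Lemma dotp_abs (g x : V) : `|dotp g x| <= (\sum_(i < n) `|g 0 i|) * `|x|.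
Proof.
rewrite /dotp mulr_suml. apply: (le_trans (ler_norm_sum _ _ _)).
apply: ler_sum => i _. rewrite normrM. apply: ler_wpM2l => //. exact: coord_le.
Qed.

Lemma dual_sup (g : V) : has_sup [set dotp g x | x in [set x | N x <= 1]].
Proof.
split; first by exists (dotp g 0), 0 => //=; rewrite N0.
have [c c0 hc] := N_lower.
exists ((\sum_(i < n) `|g 0 i|) / c) => _ [x /= Nx1 <-].
apply: (le_trans (ler_norm _)). apply: (le_trans (dotp_abs g x)).
rewrite ler_pdivlMr // -mulrA -[leRHS]mulr1. apply: ler_wpM2l; first by apply: sumr_ge0.
rewrite mulrC. apply: (le_trans (hc x)). lra.
Qed.

Lemma dual_ge0 (g : V) : 0 <= dual_norm N g.
Proof.
apply: (sup_upper_bound (dual_sup g)). exists 0 => /=; first by rewrite N0.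
exact: dotp0r.
Qed.

Lemma dotp_le (g v : V) : dotp g v <= dual_norm N g * N v.
Proof.
have [Nv0|Nvp] := eqVneq (N v) 0.
  by rewrite Nv0 (N_eq0 _ Nv0) dotp0r mulr0.
have Np : 0 < N v by rewrite lt_neqAle eq_sym Nvp Nge0.
have := sup_upper_bound (dual_sup g) (x := dotp g ((N v)^-1 *: v)).
rewrite dotpZr -ler_pdivrMr // mulrC => -> //. exists ((N v)^-1 *: v) => //=.
rewrite NZ ger0_norm ?invr_ge0 ?Nge0 // mulVf //.
by rewrite dotpZr mulrC.
Qed.

Lemma dotp_absN (g v : V) : `|dotp g v| <= dual_norm N g * N v.
Proof.
rewrite ler_norml dotp_le andbT. rewrite lerNl -dotpNr -(NN v). exact: dotp_le.
Qed.


Lemma KL (X : set V) (hr : V -> R) (k cc : R) (Av Cv gv x : V) (m : R) :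
  (forall y z l, X y -> X z -> 0 <= l <= 1 -> X (l *: y + (1 - l) *: z)) ->
  (forall y z l, X y -> X z -> 0 <= l <= 1 ->
     hr (l *: y + (1 - l) *: z) <= l * hr y + (1 - l) * hr z - l * (1 - l) / 2 * N (y - z) ^+ 2) ->
  0 < k -> 0 <= cc -> (forall v, dotp Cv v <= cc * N v) ->
  X x -> (forall y, X y -> dotp Av x + k * hr x <= dotp Av y + k * hr y) ->
  (forall w, X w -> m <= dotp Av w + dotp Cv w + k * hr w) ->
  forall y, X y ->
  m <= dotp Av y + dotp Cv y + k * hr y + (dotp gv y - dotp gv x)
       + (dual_norm N gv ^+ 2 / 2 + dual_norm N gv * cc) / k.
Proof.
move=> Xc SC k0 cc0 hC Xx xmin mlb y Xy.
pose Psi w := dotp Av w + dotp Cv w + k * hr w.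
pose Phi w := dotp Av w + k * hr w.
set γ := dual_norm N gv.
have γ0 : 0 <= γ := dual_ge0 gv.
have PsiSC : forall y z l, X y -> X z -> 0 <= l <= 1 ->
    Psi (l *: y + (1-l) *: z) <= l * Psi y + (1-l) * Psi z - l * (1-l) * k / 2 * N (y - z) ^+ 2.
  move=> y' z l Xy' Xz hl. rewrite /Psi !dotpDr !dotpZr.
  have := ler_wpM2l (ltW k0) (SC y' z l Xy' Xz hl). nra.
have PhiSC : forall y z l, X y -> X z -> 0 <= l <= 1 ->
    Phi (l *: y + (1-l) *: z) <= l * Phi y + (1-l) * Phi z - l * (1-l) * k / 2 * N (y - z) ^+ 2.
  move=> y' z l Xy' Xz hl. rewrite /Phi !dotpDr !dotpZr.
  have := ler_wpM2l (ltW k0) (SC y' z l Xy' Xz hl). nra.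
pose S := Psi @` X.
have Sne : S !=set0 by exists (Psi x), x.
have Slb : has_lbound S by exists m => _ [w Xw <-]; exact: mlb.
set m0 := inf S.
have hm0 : forall w, X w -> m0 <= Psi w by move=> w Xw; apply: ge_inf => //; exists w.
have mm0 : m <= m0 by apply: lb_le_inf => // _ [w Xw <-]; exact: mlb.
suff Z0 : 0 <= k * (Psi y - m0 + (dotp gv y - dotp gv x)) + γ ^+ 2 / 2 + γ * cc.
  have : 0 <= (k * (Psi y - m0 + (dotp gv y - dotp gv x)) + γ ^+ 2 / 2 + γ * cc) / k.
    by apply: divr_ge0 => //; exact: ltW.
  have -> : (k * (Psi y - m0 + (dotp gv y - dotp gv x)) + γ ^+ 2 / 2 + γ * cc) / k
     = Psi y - m0 + (dotp gv y - dotp gv x) + (γ ^+ 2 / 2 + γ * cc) / k.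
    by field; rewrite gt_eqF.
  rewrite /Psi. lra.
apply: (@lim_small _ (k + 2 * γ ^+ 2 + 2 * γ * cc)).
  have : 0 <= γ ^+ 2 by exact: sqr_ge0.
  have : 0 <= γ * cc by exact: mulr_ge0.
  lra.
move=> L L0 L1.
have hL : 0 <= L <= 1 by apply/andP; split; lra.
set ε := L ^+ 4 / 2.
have L4 : 0 < L ^+ 4 by apply: exprn_gt0.
have ε0 : 0 < ε by rewrite /ε; lra.
have [_ [z Xz <-] hz] := inf_adherent ε0 (conj Sne Slb).
rewrite -/m0 in hz.
set D := N (y - z). set d := N (x - z).
have D0 : 0 <= D by exact: Nge0.
have d0 : 0 <= d by exact: Nge0.
have L3 : L ^+ 4 = L * L ^+ 3 by rewrite exprS.
have F1 : (1 - L) * k * D ^+ 2 / 2 - L ^+ 3 <= Psi y - m0.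
  have h1 := hm0 _ (Xc y z L Xy Xz hL).
  have h2 := PsiSC y z L Xy Xz hL.
  have h3 : (1 - L) * Psi z <= (1 - L) * (m0 + ε) by apply: ler_wpM2l; lra.
  rewrite -/D in h2.
  have h4 : L * ((1 - L) * k * D ^+ 2 / 2 - L ^+ 3) <= L * (Psi y - m0).
    have : (1 - L) * ε <= L ^+ 4 by rewrite /ε; nra.
    rewrite L3 => h5. nra.
  by rewrite ler_pM2l in h4.
have F6 : (1 - L) * k * d ^+ 2 <= cc * d + L ^+ 3.
  have h1 := hm0 _ (Xc x z L Xx Xz hL).
  have h2 := PsiSC x z L Xx Xz hL.
  have h3 : (1 - L) * Psi z <= (1 - L) * (m0 + ε) by apply: ler_wpM2l; lra.
  rewrite -/d in h2.
  have h6 := xmin _ (Xc z x L Xz Xx hL).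
  have h7 := PhiSC z x L Xz Xx hL.
  rewrite NB -/d in h7.
  have h8 : dotp Cv x - dotp Cv z <= cc * d by rewrite -dotpBr; exact: hC.
  have h4 : L * ((1 - L) * k * d ^+ 2) <= L * (cc * d + L ^+ 3).
    have : ε <= L ^+ 4 by rewrite /ε; lra.
    rewrite L3 => h5. rewrite /Psi in h1 h2 h3 hz. rewrite /Phi in h7. nra.
  by rewrite ler_pM2l in h4.
have Fl : - γ * D - γ * d <= dotp gv y - dotp gv x.
  have -> : dotp gv y - dotp gv x = dotp gv (y - z) + dotp gv (z - x).
    rewrite !dotpBr; ring.
  have e1 := dotp_absN gv (y - z). have e2 := dotp_absN gv (z - x).
  rewrite NB -/d in e2. rewrite -/D -/γ in e1. rewrite -/γ in e2.
  move: e1 e2; rewrite !ler_norml => /andP[e1 _] /andP[e2 _]. lra.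
exact: (@alg_key _ k γ cc L D d _ _ k0 γ0 cc0 L0 L1 D0 d0 F1 F6 Fl).
Qed.

End NormFacts.
Lemma sqrt_step {R : realType} (Lp a U : R) : 0 <= Lp -> 0 <= a -> Lp + a <= U ->
  2 * Num.sqrt Lp + a / Num.sqrt U <= 2 * Num.sqrt (Lp + a).
Proof.
move=> L0 a0 LU.
have [->|ap] := eqVneq a 0.
  by rewrite mul0r addr0 addr0.
have apos : 0 < a by rewrite lt_neqAle eq_sym ap a0.
set s := Num.sqrt Lp. set s' := Num.sqrt (Lp + a).
have s0 : 0 <= s by exact: sqrtr_ge0.
have s'0 : 0 < s' by rewrite sqrtr_gt0; lra.
have ss : s ^+ 2 = Lp by rewrite sqr_sqrtr.
have ss' : s' ^+ 2 = Lp + a by rewrite sqr_sqrtr //; lra.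
have h1 : a / Num.sqrt U <= a / s'.
  apply: ler_wpM2l => //. rewrite lef_pV2 ?posrE //; last by rewrite sqrtr_gt0; lra.
  rewrite ler_sqrt //; lra.
have h2 : a / s' <= 2 * (s' - s).
  rewrite ler_pdivrMr //. have := sqr_ge0 (s' - s). nra.
lra.
Qed.

Lemma sqrt_sum {R : realType} (a U : nat -> R) (T : nat) :
  (forall t, (1 <= t <= T)%N -> 0 <= a t) ->
  (forall t, (1 <= t <= T)%N -> 0 < U t) ->
  (forall t, (1 <= t <= T)%N -> \sum_(1 <= s < t.+1) a s <= U t) ->
  \sum_(1 <= t < T.+1) a t / Num.sqrt (U t) <= 2 * Num.sqrt (\sum_(1 <= s < T.+1) a s).
Proof.
elim: T => [|T IH] ha hU hL.
  by rewrite !big_geq // sqrtr0 mulr0.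
rewrite big_nat_recr //= [X in _ <= 2 * Num.sqrt X]big_nat_recr //=.
have IH' := IH (fun t ht => ha t (ltac:(lia))) (fun t ht => hU t (ltac:(lia))) (fun t ht => hL t (ltac:(lia))).
apply: (le_trans (lerD IH' (lexx _))).
apply: sqrt_step.
- rewrite big_nat_cond; apply: sumr_ge0 => i /andP[/andP[hi1 hi2] _]; apply: ha; lia.
- apply: ha. lia.
- rewrite -big_nat_recr //=. apply: hL. lia.
Qed.
Lemma dotp_suml {R : realType} {n : nat} (I : Type) (r : seq I) (P : pred I) (F : I -> 'rV[R]_n) (y : 'rV[R]_n) :
  dotp (\sum_(i <- r | P i) F i) y = \sum_(i <- r | P i) dotp (F i) y.
Proof.
apply: (big_morph (fun a => dotp a y)).
  move=> a b; rewrite /dotp -big_split /=; apply: eq_bigr => j _; rewrite mxE; ring.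
rewrite /dotp; apply: big1 => j _; rewrite mxE; ring.
Qed.
Theorem lemma5 (R : realType) (n : nat)
  (N : 'rV[R]_n -> R) (X : set 'rV[R]_n) (h : 'rV[R]_n -> \bar R)
  (T : nat) (I : Type) (i : nat -> I) (Av : I -> nat -> pred nat)
  (f : nat -> 'rV[R]_n -> \bar R) (x g : nat -> 'rV[R]_n)
  (U : nat -> R) (r : R) (p : 'rV[R]_n) :
  is_norm N ->
  closed X -> convex_set X ->
  lower_semicontinuous h ->
  strongly_convex_on N X h ->
  (forall y, X y -> (h y < +oo)%E) ->
  continuous_subgrad_selection h ->
  (forall y, (0 <= h y)%E) ->
  (* losses *)
  (forall t, (1 <= t <= T)%N -> convex_efun (f t)) ->
  (forall t y, (1 <= t <= T)%N -> f t y <> -oo%E) ->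
  (forall t y, (1 <= t <= T)%N -> X y -> dom_subdiff (f t) y) ->
  (* availability sets: S^j_t ⊆ {1,...,t-1}, nondecreasing in t *)
  (forall j t s, (1 <= t <= T)%N -> Av j t s -> (1 <= s < t)%N) ->
  (forall j t t' s, (1 <= t)%N -> (t <= t')%N -> (t' <= T)%N ->
     Av j t s -> Av j t' s) ->
  (* step sizes / lag bounds *)
  (forall t, (1 <= t <= T)%N -> 0 < U t) ->
  (forall t t', (1 <= t)%N -> (t <= t')%N -> (t' <= T)%N -> U t <= U t') ->
  (forall t, (1 <= t <= T)%N ->
     \sum_(1 <= s < t.+1)
        (dual_norm N (g s) ^+ 2 +
         2 * dual_norm N (g s) *
           \sum_(1 <= q < s | ~~ Av (i s) s q) dual_norm N (g q))
     <= U t) ->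
  0 < r -> X p -> (h p <= (r ^+ 2)%:E)%E ->
  (* DDA iterates with eta_t = r / sqrt (U t), and revealed subgradients *)
  (forall t, (1 <= t <= T)%N ->
     X (x t) /\
     forall y, X y ->
       ((\sum_(1 <= s < t | Av (i t) t s) dotp (g s) (x t))%:E
          + ((r / Num.sqrt (U t))^-1)%:E * h (x t)
        <= (\sum_(1 <= s < t | Av (i t) t s) dotp (g s) y)%:E
          + ((r / Num.sqrt (U t))^-1)%:E * h y)%E) ->
  (forall t, (1 <= t <= T)%N -> subdiff (f t) (x t) (g t)) ->
  (\sum_(1 <= t < T.+1) f t (x t) - \sum_(1 <= t < T.+1) f t p
     <= (2 * r * Num.sqrt (U T))%:E)%E.

Proof.
move=> hN _ hconv _ hsc hfin _ h0 _ _ fdom Avr _ U0 Umono UL r0 Xp hp DDA sub.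
have [T0|T1] := eqVneq T 0%N.
  rewrite T0 !big_geq // subee // lee_fin.
  apply: mulr_ge0; [apply: mulr_ge0 => //; lra| exact: sqrtr_ge0].
have T1' : (1 <= T)%N by rewrite lt0n.
pose hr y := fine (h y).
have hE : forall y, X y -> h y = (hr y)%:E.
  move=> y Xy; rewrite /hr fineK // ge0_fin_numE //; exact: hfin.
have hr0 : forall y, X y -> 0 <= hr y.
  by move=> y Xy; have := h0 y; rewrite hE // lee_fin.
have Xc : forall y z l, X y -> X z -> 0 <= l <= 1 -> X (l *: y + (1 - l) *: z).
  move=> y z l Xy Xz /andP[l0 l1].
  have := hconv y z (Itv01 l0 l1). rewrite !inE. move=> /(_ Xy Xz). by [].
have SC : forall y z l, X y -> X z -> 0 <= l <= 1 ->
     hr (l *: y + (1 - l) *: z) <= l * hr y + (1 - l) * hr z - l * (1 - l) / 2 * N (y - z) ^+ 2.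
  move=> y z l Xy Xz hl. have := hsc y z l Xy Xz hl.
  by rewrite (hE _ (Xc _ _ _ Xy Xz hl)) (hE _ Xy) (hE _ Xz) -!EFinM -!EFinD lee_fin.
pose κ t := (r / Num.sqrt (U t))^-1.
have κE : forall t, (1 <= t <= T)%N -> κ t = Num.sqrt (U t) / r.
  by move=> t ht; rewrite /κ invf_div.
have κ0 : forall t, (1 <= t <= T)%N -> 0 < κ t.
  move=> t ht; rewrite κE // divr_gt0 // sqrtr_gt0; exact: U0.
have κmono : forall t t', (1 <= t)%N -> (t <= t')%N -> (t' <= T)%N -> κ t <= κ t'.
  move=> t t' h1 h2 h3; rewrite !κE; try lia.
  rewrite ler_pM2r ?invr_gt0 // ler_sqrt; first exact: Umono.
  apply: ltW; apply: U0; lia.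
pose γ s := dual_norm N (g s).
pose P t s := Av (i t) t s.
pose Avec t := \sum_(1 <= s < t | P t s) g s.
pose Cvec t := \sum_(1 <= s < t | ~~ P t s) g s.
pose cc t := \sum_(1 <= q < t | ~~ P t q) γ q.
pose b t y := \sum_(1 <= s < t) dotp (g s) y.
have bE : forall t y, b t y = dotp (Avec t) y + dotp (Cvec t) y.
  by move=> t y; rewrite /b /Avec /Cvec !dotp_suml (bigID (P t)) /=.
have γ0 : forall s, 0 <= γ s by move=> s; exact: dual_ge0.
have cc0 : forall t, 0 <= cc t by move=> t; apply: sumr_ge0.
have hC : forall t v, dotp (Cvec t) v <= cc t * N v.
  move=> t v; rewrite dotp_suml /cc mulr_suml; apply: ler_sum => s _; exact: dotp_le.
have DDAr : forall t, (1 <= t <= T)%N -> X (x t) /\ forall y, X y ->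
    dotp (Avec t) (x t) + κ t * hr (x t) <= dotp (Avec t) y + κ t * hr y.
  move=> t ht; have [Xt Ht] := DDA t ht; split => // y Xy.
  have := Ht y Xy. by rewrite (hE _ Xt) (hE _ Xy) -!EFinM -!EFinD lee_fin /Avec !dotp_suml.
pose err t := (γ t ^+ 2 / 2 + γ t * cc t) / κ t.
pose Sx t := \sum_(1 <= s < t) (dotp (g s) (x s) - err s).
have step : forall t, (1 <= t <= T)%N -> (forall y, X y -> Sx t <= b t y + κ t * hr y) ->
   forall y, X y -> Sx t.+1 <= b t.+1 y + κ t * hr y.
  move=> t ht IH y Xy.
  have [Xt Ht] := DDAr t ht.
  have mlb : forall w, X w -> Sx t <= dotp (Avec t) w + dotp (Cvec t) w + κ t * hr w.
    by move=> w Xw; rewrite -bE; exact: IH.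
  have := @KL _ _ N hN X hr (κ t) (cc t) (Avec t) (Cvec t) (g t) (x t) (Sx t) Xc SC (κ0 t ht) (cc0 t) (hC t) Xt Ht mlb y Xy.
  have -> : Sx t.+1 = Sx t + (dotp (g t) (x t) - err t).
    by rewrite /Sx big_nat_recr //=; case/andP: ht.
  have -> : b t.+1 y = b t y + dotp (g t) y.
    by rewrite /b big_nat_recr //=; case/andP: ht.
  rewrite bE. rewrite /err /γ. lra.
have claim : forall k, (1 <= k <= T)%N -> forall y, X y -> Sx k <= b k y + κ k * hr y.
  elim=> [//|k IHk] hk y Xy.
  have [k0|kpos] := eqVneq k 0%N.
    subst k. rewrite /Sx /b !big_geq // add0r.
    apply: mulr_ge0; [apply: ltW; exact: κ0| exact: hr0].
  have hk' : (1 <= k <= T)%N by apply/andP; split; [rewrite lt0n|]; lia.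
  apply: (le_trans (step k hk' (IHk hk') y Xy)).
  rewrite lerD2l. apply: ler_wpM2r; first exact: hr0.
  apply: κmono; lia.
have fin := step T (ltac:(lia)) (claim T (ltac:(lia))) p Xp.
have fxE : forall t, (1 <= t < T.+1)%N -> f t (x t) = (fine (f t (x t)))%:E.
  by move=> t ht; have [fn _] := sub t ht; rewrite fineK.
have fpE : forall t, (1 <= t < T.+1)%N -> f t p = (fine (f t p))%:E.
  by move=> t ht; have [gg [fn _]] := fdom t p ht Xp; rewrite fineK.
rewrite (eq_big_nat _ _ fxE) (eq_big_nat _ _ fpE) !sumEFin -EFinB lee_fin.
have reg : forall t, (1 <= t < T.+1)%N ->
    fine (f t (x t)) - fine (f t p) <= dotp (g t) (x t) - dotp (g t) p.
  move=> t ht. have [_ hs] := sub t ht. have := hs p.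
  rewrite (fxE t ht) (fpE t ht) -EFinD lee_fin dotpBr. lra.
rewrite -sumrB.
apply: (le_trans (ler_sum_nat reg)).
rewrite sumrB.
have SxE : Sx T.+1 = \sum_(1 <= t < T.+1) dotp (g t) (x t) - \sum_(1 <= t < T.+1) err t.
  by rewrite /Sx sumrB.
have e1 : κ T * hr p <= r * Num.sqrt (U T).
  have hp' : hr p <= r ^+ 2 by move: hp; rewrite (hE _ Xp) lee_fin.
  rewrite κE; last lia.
  have : Num.sqrt (U T) / r * hr p <= Num.sqrt (U T) / r * r ^+ 2.
    apply: ler_wpM2l => //; apply: divr_ge0; [exact: sqrtr_ge0| exact: ltW].
  have -> : Num.sqrt (U T) / r * r ^+ 2 = r * Num.sqrt (U T).
    by field; rewrite gt_eqF.
  done.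
have e2 : \sum_(1 <= t < T.+1) err t <= r * Num.sqrt (U T).
  pose a s := γ s ^+ 2 + 2 * γ s * cc s.
  have errE : forall t, (1 <= t < T.+1)%N -> err t = r / 2 * (a t / Num.sqrt (U t)).
    move=> t ht. rewrite /err κE; last lia.
    have s0 : 0 < Num.sqrt (U t) by rewrite sqrtr_gt0; apply: U0; lia.
    rewrite /a. field. by rewrite !gt_eqF.
  rewrite (eq_big_nat _ _ errE) -mulr_sumr.
  have SS := @sqrt_sum _ a U T (fun t ht => ltac:(rewrite /a; apply: addr_ge0; [exact: sqr_ge0| apply: mulr_ge0; [apply: mulr_ge0 => //| exact: cc0]]))
     U0 UL.
  have LU : \sum_(1 <= s < T.+1) a s <= U T by apply: UL; lia.
  have sq : Num.sqrt (\sum_(1 <= s < T.+1) a s) <= Num.sqrt (U T).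
    rewrite ler_sqrt //. apply: ltW; apply: U0; lia.
  have r2 : 0 <= r / 2 by apply: divr_ge0 => //; exact: ltW.
  have h1 := ler_wpM2l r2 SS.
  have h2 := ler_wpM2l (ltW r0) sq.
  have E2 : r / 2 * (2 * Num.sqrt (\sum_(1 <= s < T.+1) a s)) = r * Num.sqrt (\sum_(1 <= s < T.+1) a s).
    by field.
  rewrite E2 in h1.
  exact: (le_trans h1 h2).
rewrite /b in fin. lra.
Qed.
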